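(* For all integers $k,n\ge 1$, in the algebra $\mathfrak{H}=\mathbb{Q}\langle x,y\rangle$, $$S(z_{k+1}z_1^{\,n})=\sum_{t=1}^{n+1}\ \sum_{\substack{a_1+a_2+\dots+a_t=n+1-t\\ a_i\ge 0,\ i=1,\dots,t}} z_{a_t+k+1}\,z_{a_1+1}\,z_{a_2+1}\cdots z_{a_{t-1}+1}.$$
   Context: $\mathfrak{H}=\mathbb{Q}\langle x,y\rangle$ is the algebra of noncommutative polynomials in letters $x,y$ over $\mathbb{Q}$; $A^*$ denotes the set of words in $x,y$ including the empty word $1$. For a positive integer $k$, $z_k=x^{k-1}y$. Let $\sigma$ be the algebra automorphism of $\mathfrak{H}$ with $\sigma(x)=x$, $\sigma(y)=x+y$. The $\mathbb{Q}$-linear map $S:\mathfrak{H}\to\mathfrak{H}$ is defined by $S(1)=1$ and $S(wa)=\sigma(w)a$ for every word $w\in A^*$ and letter $a\in\{x,y\}$. For $t=1$ the word on the right is just $z_{a_1+k+1}$. *)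

(* Defs.v *)
(* The free algebra H = Q<x,y> is modelled by coefficient
   functions  word -> rat  (a polynomial sum_w c_w w is the map w |-> c_w);
   all elements appearing below have finite support. *)
From HB Require Import structures.
From mathcomp Require Import all_boot all_order all_algebra.
Set Implicit Arguments. Unset Strict Implicit. Unset Printing Implicit Defensive.
Import Order.TTheory GRing.Theory Num.Theory.
Local Open Scope ring_scope.

Inductive letter := lx | ly.
Definition letter_eqb (a b : letter) : bool :=
  match a, b with lx, lx | ly, ly => true | _, _ => false end.
Lemma letter_eqP : Equality.axiom letter_eqb.
Proof. by case; case; constructor. Qed.
HB.instance Definition _ := hasDecEq.Build letter letter_eqP.

Definition word := seq letter.

Definition H := word -> rat.

Definition pword (w : word) : H := fun u => (u == w)%:R.
Definition padd (p q : H) : H := fun u => p u + q u.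
Definition pmul (p q : H) : H :=
  fun w => \sum_(i < (size w).+1) p (take i w) * q (drop i w).

Definition sigma_letter (a : letter) : H :=
  match a with lx => pword [:: lx] | ly => padd (pword [:: lx]) (pword [:: ly]) end.
Fixpoint sigma_word (w : word) : H :=
  match w with [::] => pword [::] | a :: w' => pmul (sigma_letter a) (sigma_word w') end.

(* S(1) = 1, S(w a) = sigma(w) a, on words (S is the linear extension) *)
Definition S_word (w : word) : H :=
  match w with
  | [::] => pword [::]
  | a :: w' => pmul (sigma_word (belast a w')) (pword [:: last a w'])
  end.

Definition z (k : nat) : word := rcons (nseq k.-1 lx) ly.

(* Main.v *)
Require Import Defs.
From mathcomp Require Import all_boot all_order all_algebra zify.
Set Implicit Arguments. Unset Strict Implicit. Unset Printing Implicit Defensive.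
Import Order.TTheory GRing.Theory Num.Theory.
Local Open Scope ring_scope.

Lemma pmul_wl (v : word) (q : H) (u : word) : (size v <= size u)%N ->
  pmul (pword v) q u = (take (size v) u == v)%:R * q (drop (size v) u).
Proof.
move=> hv; rewrite /pmul (bigD1 (Ordinal (n:=(size u).+1) (m:=size v) hv)) //=.
rewrite big1 ?addr0 // => i /eqP neq; rewrite /pword.
suff -> : (take i u == v) = false by rewrite mul0r.
apply/negbTE/eqP => E; apply: neq; apply: val_inj => /=.
rewrite -E size_take; have := ltn_ord i; rewrite ltnS leq_eqVlt.
by case/orP => [/eqP->|->] //; rewrite ltnn.
Qed.

Lemma pmul_wl0 (v : word) (q : H) (u : word) : (size u < size v)%N ->
  pmul (pword v) q u = 0.
Proof.
move=> hv; rewrite /pmul big1 // => i _; rewrite /pword.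
suff -> : (take i u == v) = false by rewrite mul0r.
apply/negbTE/eqP => E; move: hv; rewrite -E size_take.
by case: ifP => [/ltnW h|_]; rewrite ?ltnn // ltnNge h.
Qed.

Lemma pmul_wr (p : H) (v : word) (u : word) : (size v <= size u)%N ->
  pmul p (pword v) u = (drop (size u - size v) u == v)%:R * p (take (size u - size v) u).
Proof.
move=> hv; have hi : (size u - size v < (size u).+1)%N by rewrite ltnS leq_subr.
rewrite /pmul (bigD1 (Ordinal hi)) //= mulrC.
rewrite big1 ?addr0 // => i /eqP neq; rewrite /pword.
suff -> : (drop i u == v) = false by rewrite mulr0.
apply/negbTE/eqP => E; apply: neq; apply: val_inj => /=.
rewrite -E size_drop; have := ltn_ord i; rewrite ltnS => hi'.
by rewrite subKn.
Qed.

Lemma pmul_wr0 (p : H) (v : word) (u : word) : (size u < size v)%N ->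
  pmul p (pword v) u = 0.
Proof.
move=> hv; rewrite /pmul big1 // => i _; rewrite /pword.
suff -> : (drop i u == v) = false by rewrite mulr0.
apply/negbTE/eqP => E; move: hv; rewrite -E size_drop.
by rewrite ltnNge leq_subr.
Qed.

Lemma pmul_paddl (p p' q : H) u : pmul (padd p p') q u = pmul p q u + pmul p' q u.
Proof. by rewrite /pmul -big_split /=; apply: eq_bigr => i _; rewrite /padd mulrDl. Qed.

Definition compat (a b : letter) := (a == ly) || (b == lx).

Lemma sigma_wordE w u : sigma_word w u = (all2 compat w u)%:R.
Proof.
elim: w u => [|a w IH] [|b u] //=.
- case: a => /=; [by rewrite pmul_wl0|].
  by rewrite pmul_paddl !pmul_wl0 // addr0.
- case: a => /=.
    by rewrite pmul_wl //= IH /compat /= drop0 -natrM mulnb eqseq_cons take0 andbT.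
  rewrite pmul_paddl.
  rewrite !pmul_wl //= IH /compat /= drop0 -mulrDl.
  by case: b => /=; rewrite ?add0r ?addr0 take0 eqxx mul1r.
Qed.

Lemma S_word_rcons w c : S_word (rcons w c) = pmul (sigma_word w) (pword [:: c]).
Proof. by case: w => [|a w] //=; rewrite belast_rcons last_rcons. Qed.
Lemma all2_nseq k n u : all2 compat (nseq k lx ++ nseq n ly) u =
  (size u == (k+n)%N) && (take k u == nseq k lx).
Proof.
elim: k u => [|k IH] [|b u] //=.
- by case: n.
- rewrite andbT add0n; elim: n u b => [|n IHn] u b //=.
  case: u => [|c u] /=; first by case: n {IHn}.
  by rewrite IHn.
- by rewrite IH addSn eqSS eqseq_cons /compat /= andbCA.
Qed.

Definition P k n u := [&& last lx u == ly, size u == (k+n).+1 & take k u == nseq k lx].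

Lemma LHS_E k n u : S_word (z k.+1 ++ flatten (nseq n (z 1))) u = (P k n u)%:R.
Proof.
have -> : z k.+1 ++ flatten (nseq n (z 1)) = rcons (nseq k lx ++ nseq n ly) ly.
  rewrite /z /= cat_rcons rcons_cat; congr (_ ++ _).
  by elim: n => [|n IHn] //=; rewrite IHn.
rewrite S_word_rcons; case/lastP: u => [|u b].
  by rewrite pmul_wr0.
rewrite pmul_wr size_rcons ?subSS ?subn0 -?cats1 ?drop_size_cat ?take_size_cat //.
rewrite sigma_wordE all2_nseq /P last_cat /= size_cat /= addn1 eqSS.
rewrite eqseq_cons andbT.
case: (b =P ly) => [->|hb]; last by rewrite mul0r.
case: (size u =P (k+n)%N) => hs; last by rewrite mul1r.
by rewrite mul1r takel_cat ?hs ?leq_addr.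
Qed.
Definition blocks (s : seq nat) : word := flatten [seq rcons (nseq m lx) ly | m <- s].

Lemma blocks_cons m s : blocks (m :: s) = nseq m lx ++ ly :: blocks s.
Proof. by rewrite /blocks /= cat_rcons. Qed.

Lemma nseq_ly_inj m m' r r' : nseq m lx ++ ly :: r = nseq m' lx ++ ly :: r' -> m = m' /\ r = r'.
Proof.
elim: m m' => [|m IH] [|m'] //=.
- by case=> ->.
- by case=> /IH [-> ->].
Qed.

Lemma blocks_inj s1 s2 : blocks s1 = blocks s2 -> s1 = s2.
Proof.
elim: s1 s2 => [|m s IH] [|m' s'] //; rewrite ?blocks_cons.
- by case: m'.
- by case: m.
- by case/nseq_ly_inj => -> /IH ->.
Qed.

Lemma size_blocks s : size (blocks s) = (sumn s + size s)%N.
Proof.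
elim: s => [|m s IH] //; rewrite blocks_cons size_cat /= size_nseq IH.
by rewrite !addnS addnA.
Qed.

Lemma last_blocks x m s : last x (blocks (m :: s)) = ly.
Proof.
elim: s x m => [|m' s IH] x m.
  by rewrite /blocks /= cats0 last_rcons.
by rewrite /blocks /= last_cat -/(blocks (m' :: s)) IH.
Qed.

Lemma take_blocks k m s : (k <= m)%N -> take k (blocks (m :: s)) = nseq k lx.
Proof.
move=> hk; rewrite blocks_cons -(subnKC hk) nseqD -catA take_size_cat //.
by rewrite size_nseq.
Qed.

Lemma blocks_ex u : last lx u = ly -> exists m s, blocks (m :: s) = u.
Proof.
elim: u => [|a w IH] /=; first by [].
case: w IH => [|c w] IH /=.
  by move=> ->; exists 0%N, [::].
case/IH => m [s E]; case: a.
  by exists m.+1, s; rewrite blocks_cons /= -blocks_cons E.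
by exists 0%N, (m :: s); rewrite blocks_cons /= E.
Qed.

Lemma sumn_image t (f : 'I_t -> nat) : sumn [seq f i | i : 'I_t] = (\sum_(i < t) f i)%N.
Proof. by rewrite sumnE /image_mem big_map big_enum. Qed.

Lemma sumn_nth s : sumn s = (\sum_(i < size s) nth 0%N s i)%N.
Proof. by rewrite sumnE (big_nth 0%N) big_mkord. Qed.

Lemma nth_le_sumn s i : (nth 0%N s i <= sumn s)%N.
Proof.
elim: s i => [|m s IH] [|i] //=; first exact: leq_addr.
exact: leq_trans (IH i) (leq_addl _ _).
Qed.

Definition seqof k n t (a : {ffun 'I_t.+1 -> 'I_n.+1}) : seq nat :=
  (a ord_max + k)%N :: [seq (a (widen_ord (leqnSn t) i) : nat) | i : 'I_t].

Lemma wordE k n t (a : {ffun 'I_t.+1 -> 'I_n.+1}) :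
  z (a ord_max + k + 1) ++ flatten [seq z (a (widen_ord (leqnSn t) i) + 1) | i : 'I_t]
  = blocks (seqof k a).
Proof.
rewrite /seqof /blocks /= /z addn1 /=; congr (_ ++ _).
by rewrite /image_mem -map_comp; congr flatten; apply: eq_map => i /=; rewrite addn1.
Qed.

Lemma seqof_inj k n t (a a' : {ffun 'I_t.+1 -> 'I_n.+1}) : seqof k a = seqof k a' -> a = a'.
Proof.
rewrite /seqof /image_mem; case=> /addIn h0 /eq_in_map hm.
apply/ffunP => i; case: (ltnP i t) => hi.
  have -> : i = widen_ord (leqnSn t) (Ordinal hi) by apply: val_inj.
  by apply: val_inj; apply: hm; rewrite mem_enum.
have -> : i = ord_max by apply: val_inj => /=; apply/eqP; rewrite eqn_leq hi -ltnS ltn_ord.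
exact: val_inj.
Qed.
Lemma size_seqof k n t (a : {ffun 'I_t.+1 -> 'I_n.+1}) : size (seqof k a) = t.+1.
Proof. by rewrite /seqof /= /image_mem size_map size_enum_ord. Qed.

Lemma sumn_seqof k n t (a : {ffun 'I_t.+1 -> 'I_n.+1}) :
  sumn (seqof k a) = (k + \sum_(i < t.+1) (a i : nat))%N.
Proof.
rewrite /seqof /= sumn_image big_ord_recr /=; lia.
Qed.

Lemma P_blocks k n t (a : {ffun 'I_t.+1 -> 'I_n.+1}) : (t < n.+1)%N ->
  (\sum_(i < t.+1) (a i : nat))%N == (n.+1 - t.+1)%N ->
  P k n (blocks (seqof k a)).
Proof.
move=> ht /eqP hC; rewrite /P /seqof last_blocks eqxx /= take_blocks ?leq_addl // eqxx andbT.
rewrite -/(seqof k a) size_blocks sumn_seqof size_seqof hC.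
rewrite subSS.
by apply/eqP; lia.
Qed.

Lemma last_nseq_lx j : last lx (nseq j lx) = lx.
Proof. by elim: j. Qed.

Lemma RHS_E k n u :
  (\sum_(t < n.+1)
       \sum_(a : {ffun 'I_t.+1 -> 'I_n.+1}
               | (\sum_(i < t.+1) (a i : nat))%N == (n.+1 - t.+1)%N)
         (blocks (seqof k a) == u)%:R) = (P k n u)%:R :> rat.
Proof.
case hP : (P k n u).
2: { rewrite big1 // => t _; rewrite big1 // => a hC.
     suff /negbTE -> : blocks (seqof k a) != u by [].
     by apply/negP => /eqP E; move: hP; rewrite -E P_blocks ?ltn_ord. }
move/and3P: hP => [/eqP hl /eqP hs /eqP ht].
have hv : last lx (drop k u) = ly.
  by move: hl; rewrite -{1}(cat_take_drop k u) ht last_cat last_nseq_lx.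
case: (blocks_ex hv) => m [s hb].
have hu : u = blocks ((m + k)%N :: s).
  by rewrite blocks_cons addnC nseqD -catA -blocks_cons hb -ht cat_take_drop.
have hsz : (m + sumn s + size s = n)%N.
  by move: hs; rewrite hu size_blocks /=; lia.
have ht0 : (size s < n.+1)%N by lia.
have hm : (m < n.+1)%N by lia.
have hnth : forall i, (nth 0%N s i < n.+1)%N.
  by move=> i; have := nth_le_sumn s i; lia.
pose t0 := Ordinal ht0.
pose a0 : {ffun 'I_t0.+1 -> 'I_n.+1} :=
  [ffun i : 'I_t0.+1 => inord (if (i < size s)%N then nth 0%N s i else m)].
have hseq : seqof k a0 = (m + k)%N :: s.
  rewrite /seqof ffunE /= ltnn inordK //; congr (_ :: _).
  rewrite /image_mem.
  transitivity [seq nth 0%N s i | i <- map val (enum 'I_(size s))].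
    by rewrite -map_comp; apply: eq_map => i /=; rewrite ffunE /= ltn_ord inordK.
  by rewrite val_enum_ord -/(mkseq _ _) mkseq_nth.
have hC0 : (\sum_(i < t0.+1) (a0 i : nat))%N == (n.+1 - t0.+1)%N.
  have := sumn_seqof k a0; rewrite hseq /= => E.
  apply/eqP; rewrite subSS; lia.
rewrite (bigD1 t0) //= [X in _ + X]big1 ?addr0; last first.
  move=> t /eqP htt; rewrite big1 // => a hC.
  suff /negbTE -> : blocks (seqof k a) != u by [].
  apply/eqP => E; apply: htt; apply: val_inj => /=.
  have := congr1 size (blocks_inj (etrans E hu)).
  by rewrite size_seqof /= => -[].
rewrite (bigD1 a0 hC0) /= [X in _ + X]big1 ?addr0.
  by rewrite hu hseq eqxx.
move=> a /andP [hC hne].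
suff /negbTE -> : blocks (seqof k a) != u by [].
apply/eqP => E; move/eqP: hne; apply; apply: (@seqof_inj k).
by apply: blocks_inj; rewrite E hu hseq.
Qed.
From Stdlib Require Import FunctionalExtensionality.
Unset Implicit Arguments.

(* t ranges over 1..n+1, written t.+1 with t < n+1; a : 'I_t.+1 -> nat
   encoded with values in 'I_n.+1 (automatic since a_i <= n+1-t <= n);
   a ord_max is a_t and a (widen i), i < t, is a_(i+1). *)
Theorem lemma2p2 (k n : nat) (hk : (1 <= k)%N) (hn : (1 <= n)%N) :
  S_word (z k.+1 ++ flatten (nseq n (z 1))) =
  (fun u : word =>
     \sum_(t < n.+1)
       \sum_(a : {ffun 'I_t.+1 -> 'I_n.+1}
               | (\sum_(i < t.+1) (a i : nat))%N == (n.+1 - t.+1)%N)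
         pword (z (a ord_max + k + 1)
                ++ flatten [seq z (a (widen_ord (leqnSn t) i) + 1) | i : 'I_t])
               u).
Proof.
apply: functional_extensionality => u.
rewrite LHS_E -RHS_E; apply: eq_bigr => t _; apply: eq_bigr => a _.
by rewrite /pword wordE eq_sym.
Qed.
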